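(* Let $X$ be a set of pointed Kripke models and $\Lambda$ a normal modal logic sound with respect to $X$, such that $X_{\boldsymbol{\mathcal{L}}_{\Lambda}}$ is finite, and let $d$ be any metric on $X_{\boldsymbol{\mathcal{L}}_{\Lambda}}$. Then there exist a descriptor $D\subseteq\boldsymbol{\mathcal{L}}_{\Lambda}$, a metric $d_w\in\mathcal{D}_{(X,D)}$ and a constant $c\ge0$ such that $d_w(\boldsymbol{x}_D,\boldsymbol{y}_D)=d(\boldsymbol{x}_{\boldsymbol{\mathcal{L}}_{\Lambda}},\boldsymbol{y}_{\boldsymbol{\mathcal{L}}_{\Lambda}})+c$ for all $x,y\in X$ with $\boldsymbol{x}_{\boldsymbol{\mathcal{L}}_{\Lambda}}\neq\boldsymbol{y}_{\boldsymbol{\mathcal{L}}_{\Lambda}}$. In particular, $(X_D,d_w)$ and $(X_{\boldsymbol{\mathcal{L}}_{\Lambda}},d)$ are quasi-isometric.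
   Context: Signature: countable non-empty sets $\Phi$, $\mathcal{I}$; $\mathcal{L}$: $\varphi ::= \top\mid p\mid\neg\varphi\mid\varphi\wedge\varphi\mid\Box_i\varphi$ on pointed Kripke models, standard semantics. $\boldsymbol{\varphi}$: formulas $\Lambda$-provably equivalent to $\varphi$; $\boldsymbol{\mathcal{L}}_{\Lambda}=\{\boldsymbol{\varphi}\}$. For $D\subseteq\boldsymbol{\mathcal{L}}_{\Lambda}$: $\boldsymbol{x}_D=\{y\in X:\forall\boldsymbol{\varphi}\in D,\ y\models\varphi\iff x\models\varphi\}$, $X_D=\{\boldsymbol{x}_D:x\in X\}$. With an enumeration $\boldsymbol{\varphi}_1,\boldsymbol{\varphi}_2,\dots$ of $D$ and $w:D\to\mathbb{R}_{>0}$ with $\sum_k w(\boldsymbol{\varphi}_k)<\infty$, $d_w(\boldsymbol{x},\boldsymbol{y})=\sum_k w(\boldsymbol{\varphi}_k)d_k(\boldsymbol{x},\boldsymbol{y})$, $d_k=0$ if $x,y$ agree on $\varphi_k$ and $1$ otherwise; $\mathcal{D}_{(X,D)}$ is the set of all such $d_w$. *)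

(* Defs.v *)
From Stdlib Require Import Reals List ClassicalEpsilon.
From Coquelicot Require Import Coquelicot.
Set Implicit Arguments.
Open Scope R_scope.

Section Kripke.
Variables (Phi I : Type).

Inductive form : Type :=
| Top : form
| Var : Phi -> form
| Neg : form -> form
| And : form -> form -> form
| Box : I -> form -> form.

Definition Imp (a b : form) : form := Neg (And a (Neg b)).
Definition Iff (a b : form) : form := And (Imp a b) (Imp b a).

Record kmodel : Type := KModel {
  W : Type;
  Rel : I -> W -> W -> Prop;
  Val : Phi -> W -> Prop }.

Definition pointed : Type := { M : kmodel & W M }.

Fixpoint satw (M : kmodel) (w : W M) (f : form) : Prop :=
  match f with
  | Top => True
  | Var p => Val M p w
  | Neg a => ~ satw M w a
  | And a b => satw M w a /\ satw M w b
  | Box i a => forall v, Rel M i w v -> satw M v a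
  end.

Definition sat (x : pointed) (f : form) : Prop := satw (projT1 x) (projT2 x) f.

Fixpoint peval (v : form -> bool) (f : form) : bool :=
  match f with
  | Top => true
  | Var p => v (Var p)
  | Neg a => negb (peval v a)
  | And a b => andb (peval v a) (peval v b)
  | Box i a => v (Box i a)
  end.

Definition tautology (f : form) : Prop := forall v, peval v f = true.

Fixpoint subst (s : Phi -> form) (f : form) : form :=
  match f with
  | Top => Top
  | Var p => s p
  | Neg a => Neg (subst s a)
  | And a b => And (subst s a) (subst s b)
  | Box i a => Box i (subst s a)
  end.

Definition normal_logic (L : form -> Prop) : Prop :=
  (forall f, tautology f -> L f) /\
  (forall i a b, L (Imp (Box i (Imp a b)) (Imp (Box i a) (Box i b)))) /\
  (forall a b, L (Imp a b) -> L a -> L b) /\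
  (forall i a, L a -> L (Box i a)) /\
  (forall s a, L a -> L (subst s a)).

Definition sound (L : form -> Prop) (X : pointed -> Prop) : Prop :=
  forall f, L f -> forall x, X x -> sat x f.

Definition equivL (L : form -> Prop) (a b : form) : Prop := L (Iff a b).

(** A subset D of L_Lambda, represented as the (equivalence-closed) set of
    formulas whose classes lie in D. *)
Definition descriptor (L : form -> Prop) (D : form -> Prop) : Prop :=
  forall a b, equivL L a b -> D a -> D b.

Definition clsD (X : pointed -> Prop) (D : form -> Prop) (x : pointed) : pointed -> Prop :=
  fun y => X y /\ forall f, D f -> (sat y f <-> sat x f).

Definition XL (X : pointed -> Prop) : Type :=
  { S : pointed -> Prop | exists x, X x /\ S = clsD X (fun _ => True) x }.

Definition toXL (X : pointed -> Prop) (x : pointed) (Hx : X x) : XL X :=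
  exist _ (clsD X (fun _ => True) x) (ex_intro _ x (conj Hx eq_refl)).

Definition finite_type (T : Type) : Prop := exists l : list T, forall t, In t l.

Definition is_metric (T : Type) (d : T -> T -> R) : Prop :=
  (forall s t, d s t = 0 <-> s = t) /\
  (forall s t, d s t = d t s) /\
  (forall s t u, d s u <= d s t + d t u).

(** Enumeration of the classes of D: a sequence (possibly with gaps, to allow
    finite D) listing every class of D exactly once. *)
Definition enumeration (L : form -> Prop) (D : form -> Prop) (e : nat -> option form) : Prop :=
  (forall k f, e k = Some f -> D f) /\
  (forall f, D f -> exists k g, e k = Some g /\ equivL L f g) /\
  (forall k l f g, e k = Some f -> e l = Some g -> equivL L f g -> k = l).

Definition dk (f : form) (x y : pointed) : R :=
  if excluded_middle_informative (sat x f <-> sat y f) then 0 else 1.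

Definition wseq (e : nat -> option form) (w : nat -> R) (k : nat) : R :=
  match e k with Some _ => w k | None => 0 end.

Definition dw_term (e : nat -> option form) (w : nat -> R) (x y : pointed) (k : nat) : R :=
  match e k with Some f => w k * dk f x y | None => 0 end.

(** dist is a member of D_(X,D) (as a function of representatives x, y of
    x_D, y_D). *)
Definition in_DXD (L : form -> Prop) (D : form -> Prop)
    (dist : pointed -> pointed -> R) : Prop :=
  exists (e : nat -> option form) (w : nat -> R),
    enumeration L D e /\
    (forall k f, e k = Some f -> 0 < w k) /\
    ex_series (wseq e w) /\
    forall x y, dist x y = Series (dw_term e w x y).

End Kripke.

(* Main.v *)
Require Import Defs.
From Stdlib Require Import Reals List.
From Coquelicot Require Import Coquelicot.
From Stdlib Require Import Lia Lra FunctionalExtensionality Classical ClassicalEpsilon PropExtensionality ProofIrrelevance.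
Open Scope R_scope.

Fixpoint fsum (f : nat -> R) (n : nat) : R :=
  match n with O => 0 | S m => fsum f m + f m end.

Lemma fsum_ext f g n : (forall k, (k < n)%nat -> f k = g k) -> fsum f n = fsum g n.
Proof. induction n; simpl; intros H; [reflexivity|]. rewrite IHn, H; [reflexivity|lia|]. intros; apply H; lia. Qed.

Lemma fsum_plus f g n : fsum (fun k => f k + g k) n = fsum f n + fsum g n.
Proof. induction n; simpl; [lra|]. rewrite IHn; lra. Qed.
Lemma fsum_minus f g n : fsum (fun k => f k - g k) n = fsum f n - fsum g n.
Proof. induction n; simpl; [lra|]. rewrite IHn; lra. Qed.
Lemma fsum_scal c f n : fsum (fun k => c * f k) n = c * fsum f n.
Proof. induction n; simpl; [lra|]. rewrite IHn; lra. Qed.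
Lemma fsum_const c n : fsum (fun _ => c) n = INR n * c.
Proof. induction n; simpl fsum; [simpl; lra|]. rewrite IHn, S_INR; lra. Qed.
Lemma fsum_zero f n : (forall k, (k < n)%nat -> f k = 0) -> fsum f n = 0.
Proof. intros H. rewrite (fsum_ext f (fun _ => 0)) by auto. rewrite fsum_const; lra. Qed.
Lemma fsum_nonneg f n : (forall k, (k < n)%nat -> 0 <= f k) -> 0 <= fsum f n.
Proof. induction n; simpl; intros H; [lra|]. assert (0 <= f n) by (apply H; lia).
  assert (0 <= fsum f n) by (apply IHn; intros; apply H; lia). lra. Qed.
Lemma fsum_ge_term f n a : (forall k, (k < n)%nat -> 0 <= f k) -> (a < n)%nat -> f a <= fsum f n.
Proof. induction n; simpl; intros H Ha; [lia|].
  assert (0 <= f n) by (apply H; lia).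
  assert (0 <= fsum f n) by (apply fsum_nonneg; intros; apply H; lia).
  destruct (Nat.eq_dec a n). subst; lra.
  assert (f a <= fsum f n) by (apply IHn; [intros; apply H; lia| lia]). lra. Qed.

Definition indb (b : bool) : R := if b then 1 else 0.

Lemma fsum_ind_eq a H n : (a < n)%nat -> fsum (fun j => indb (j =? a)%nat * H j) n = H a.
Proof. induction n; intros Ha; [lia|]. simpl.
  destruct (Nat.eq_dec a n).
  - subst. rewrite Nat.eqb_refl. rewrite fsum_zero. unfold indb; lra.
    intros k Hk. destruct (Nat.eqb_spec k n); [lia|]. unfold indb; lra.
  - rewrite IHn by lia. destruct (Nat.eqb_spec n a); [lia|]. unfold indb; lra. Qed.

Lemma fsum_swap F n m : fsum (fun i => fsum (fun j => F i j) m) n = fsum (fun j => fsum (fun i => F i j) n) m.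
Proof. induction n; simpl. rewrite fsum_zero; auto.
  rewrite IHn. rewrite <- fsum_plus. reflexivity. Qed.

Lemma fsum_split f a b : fsum f (a + b) = fsum f a + fsum (fun j => f (a + j)%nat) b.
Proof. induction b; simpl. rewrite Nat.add_0_r; lra. rewrite Nat.add_succ_r; simpl; rewrite IHb; lra. Qed.

Lemma fsum_double f m n : fsum f (m * n) = fsum (fun i => fsum (fun j => f (i * n + j)%nat) n) m.
Proof. induction m; simpl; [reflexivity|]. rewrite (Nat.add_comm n (m * n)), fsum_split, IHm. reflexivity. Qed.

Lemma sum_n_fsum a k : sum_n a k = fsum a (S k).
Proof. induction k. rewrite sum_O; simpl; lra. rewrite sum_Sn, IHk. reflexivity. Qed.

Lemma is_series_fin a N : (forall k, (N <= k)%nat -> a k = 0) -> is_series a (fsum a N).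
Proof. intros H.
  assert (E : forall k, (N <= k)%nat -> fsum a k = fsum a N).
  { intros k Hk; induction Hk; [reflexivity|]. simpl; rewrite IHHk, H; [lra|lia]. }
  change (is_lim_seq (sum_n a) (fsum a N)).
  apply is_lim_seq_ext_loc with (fun _ => fsum a N); [|apply is_lim_seq_const].
  exists N; intros k Hk. rewrite sum_n_fsum, (E (S k)); [reflexivity|lia]. Qed.

Definition fsum2 n (F : nat -> nat -> R) := fsum (fun i => fsum (fun j => F i j) n) n.

Lemma fsum2_ext n F G : (forall i j, (i < n)%nat -> (j < n)%nat -> F i j = G i j) -> fsum2 n F = fsum2 n G.
Proof. intros H; unfold fsum2; apply fsum_ext; intros; apply fsum_ext; auto. Qed.
Lemma fsum2_plus n F G : fsum2 n (fun i j => F i j + G i j) = fsum2 n F + fsum2 n G.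
Proof. unfold fsum2. rewrite <- fsum_plus. apply fsum_ext; intros. apply fsum_plus. Qed.
Lemma fsum2_minus n F G : fsum2 n (fun i j => F i j - G i j) = fsum2 n F - fsum2 n G.
Proof. unfold fsum2. rewrite <- fsum_minus. apply fsum_ext; intros. apply fsum_minus. Qed.
Lemma fsum2_scal n c F : fsum2 n (fun i j => c * F i j) = c * fsum2 n F.
Proof. unfold fsum2. rewrite <- fsum_scal. apply fsum_ext; intros. apply fsum_scal. Qed.

Lemma fsum_ind_eq' a H n : (a < n)%nat -> fsum (fun j => indb (a =? j)%nat * H j) n = H a.
Proof. intros. rewrite <- (fsum_ind_eq a H n) by auto. apply fsum_ext; intros. rewrite Nat.eqb_sym; auto. Qed.

Lemma S_diag n F : fsum2 n (fun i j => indb (i =? j)%nat * F i j) = fsum (fun i => F i i) n.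
Proof. unfold fsum2; apply fsum_ext; intros. apply fsum_ind_eq'; auto. Qed.

Lemma S_a n g u : (u < n)%nat ->
  fsum2 n (fun i j => indb (i <? j)%nat * g i j * indb (i =? u)%nat) = fsum (fun j => indb (u <? j)%nat * g u j) n.
Proof. intros Hu. unfold fsum2.
  rewrite (fsum_ext _ (fun i => indb (i =? u)%nat * fsum (fun j => indb (i <? j)%nat * g i j) n)).
  apply (fsum_ind_eq u (fun i => fsum (fun j => indb (i <? j)%nat * g i j) n) n Hu).
  intros. rewrite <- fsum_scal. apply fsum_ext; intros; ring. Qed.

Lemma S_b n g u : (u < n)%nat ->
  fsum2 n (fun i j => indb (i <? j)%nat * g i j * indb (j =? u)%nat) = fsum (fun i => indb (i <? u)%nat * g i u) n.
Proof. intros Hu. unfold fsum2. apply fsum_ext; intros.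
  rewrite <- (fsum_ind_eq u (fun j => indb (k <? j)%nat * g k j) n) by auto.
  apply fsum_ext; intros; ring. Qed.

Lemma S_c n g u v : (u < n)%nat -> (v < n)%nat ->
  fsum2 n (fun i j => indb (i <? j)%nat * g i j * indb (i =? u)%nat * indb (j =? v)%nat) = indb (u <? v)%nat * g u v.
Proof. intros Hu Hv. unfold fsum2.
  rewrite (fsum_ext _ (fun i => indb (i =? u)%nat * (indb (i <? v)%nat * g i v))).
  apply (fsum_ind_eq u (fun i => indb (i <? v)%nat * g i v)); auto.
  intros. rewrite <- (fsum_ind_eq v (fun j => indb (k =? u)%nat * (indb (k <? j)%nat * g k j)) n) by auto.
  apply fsum_ext; intros; ring. Qed.

Lemma S_ab n g u : (u < n)%nat -> (forall i j, g i j = g j i) ->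
  fsum2 n (fun i j => indb (i <? j)%nat * g i j * indb (i =? u)%nat) +
  fsum2 n (fun i j => indb (i <? j)%nat * g i j * indb (j =? u)%nat) = fsum (g u) n - g u u.
Proof. intros Hu Hg. rewrite S_a, S_b by auto. rewrite <- fsum_plus.
  rewrite <- (fsum_ind_eq u (g u) n) by auto. rewrite <- fsum_minus.
  apply fsum_ext; intros j _. rewrite (Hg j u).
  unfold indb; destruct (Nat.ltb_spec u j), (Nat.ltb_spec j u), (Nat.eqb_spec j u); try lia; lra. Qed.

Definition Eterm (W1 : nat -> R) (g : nat -> nat -> R) (u v i j : nat) : R :=
  indb (i =? j)%nat * W1 i * (indb (i =? u)%nat + indb (i =? v)%nat) +
  indb (i <? j)%nat * g i j * (indb (i =? u)%nat + indb (j =? u)%nat + indb (i =? v)%nat + indb (j =? v)%nat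
     - 2 * indb (i =? u)%nat * indb (j =? v)%nat - 2 * indb (j =? u)%nat * indb (i =? v)%nat).

Lemma big_eval n u v W1 g : (u < n)%nat -> (v < n)%nat -> u <> v -> (forall i j, g i j = g j i) ->
  fsum2 n (Eterm W1 g u v) =
  W1 u + W1 v + (fsum (g u) n - g u u) + (fsum (g v) n - g v v) - 2 * g u v.
Proof. intros Hu Hv Huv Hg.
  rewrite (fsum2_ext n _ (fun i j =>
     (indb (i =? j)%nat * (W1 i * (indb (i =? u)%nat + indb (i =? v)%nat)) +
     ((indb (i <? j)%nat * g i j * indb (i =? u)%nat + indb (i <? j)%nat * g i j * indb (j =? u)%nat) +
      (indb (i <? j)%nat * g i j * indb (i =? v)%nat + indb (i <? j)%nat * g i j * indb (j =? v)%nat))) -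
     (2 * (indb (i <? j)%nat * g i j * indb (i =? u)%nat * indb (j =? v)%nat) +
      2 * (indb (i <? j)%nat * g i j * indb (i =? v)%nat * indb (j =? u)%nat)))).
  2:{ intros; unfold Eterm; ring. }
  rewrite fsum2_minus, !fsum2_plus, !fsum2_scal, S_diag, !S_c by auto.
  rewrite S_ab, S_ab by auto.
  rewrite (fsum_ext _ (fun i => indb (i =? u)%nat * W1 i + indb (i =? v)%nat * W1 i)).
  2:{ intros; ring. }
  rewrite fsum_plus, !fsum_ind_eq by auto.
  rewrite (Hg v u).
  unfold indb; destruct (Nat.ltb_spec u v), (Nat.ltb_spec v u); try lia; lra. Qed.

Definition cls {Phi I} (X : pointed Phi I -> Prop) x := clsD X (fun _ => True) x.

Lemma sat_iff {Phi I} (x : pointed Phi I) a b : sat x (Iff a b) -> (sat x a <-> sat x b).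
Proof. unfold sat, Iff, Imp; simpl. intros [H1 H2]. split; intros H.
  destruct (classic (satw (projT1 x) (projT2 x) b)); tauto.
  destruct (classic (satw (projT1 x) (projT2 x) a)); tauto. Qed.

Definition Or {Phi I} (a b : form Phi I) := Defs.Neg (Defs.And (Defs.Neg a) (Defs.Neg b)).
Lemma sat_or {Phi I} (x : pointed Phi I) a b : sat x (Or a b) <-> sat x a \/ sat x b.
Proof. unfold sat, Or; simpl. split; intros H.
  destruct (classic (satw (projT1 x) (projT2 x) a)); [tauto|].
  destruct (classic (satw (projT1 x) (projT2 x) b)); tauto. tauto. Qed.

Fixpoint bigAnd {Phi I} (F : nat -> form Phi I) n :=
  match n with O => Defs.Top _ _ | S m => Defs.And (bigAnd F m) (F m) end.
Lemma sat_bigAnd {Phi I} (x : pointed Phi I) F n : sat x (bigAnd F n) <-> forall j, (j < n)%nat -> sat x (F j).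
Proof. induction n; unfold sat in *; simpl. split; auto; intros; lia.
  rewrite IHn. split. intros [H1 H2] j Hj. destruct (Nat.eq_dec j n); [subst; auto| apply H1; lia].
  intros H; split; auto. Qed.

Lemma equivL_refl {Phi I} (L : form Phi I -> Prop) a : normal_logic L -> equivL L a a.
Proof. intros [Ht _]. apply Ht. intro v; simpl. destruct (peval v a); reflexivity. Qed.
Lemma equivL_sym {Phi I} (L : form Phi I -> Prop) a b : normal_logic L -> equivL L a b -> equivL L b a.
Proof. intros [Ht [_ [Hmp _]]] H. unfold equivL in *. apply (Hmp (Iff a b)); auto.
  apply Ht. intro v; simpl. destruct (peval v a), (peval v b); reflexivity. Qed.
Lemma equivL_trans {Phi I} (L : form Phi I -> Prop) a b c : normal_logic L -> equivL L a b -> equivL L b c -> equivL L a c.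
Proof. intros [Ht [_ [Hmp _]]] H1 H2. unfold equivL in *. apply (Hmp (Iff b c)); auto.
  apply (Hmp (Iff a b)); auto.
  apply Ht. intro v; simpl. destruct (peval v a), (peval v b), (peval v c); reflexivity. Qed.

Lemma agree {Phi I} (X : pointed Phi I -> Prop) x y : X x -> cls X x = cls X y -> forall f, sat x f <-> sat y f.
Proof. intros Hx E f. assert (H : cls X x x) by (split; auto; tauto).
  rewrite E in H. destruct H as [_ H]. apply H; auto. Qed.

Lemma sep {Phi I} (X : pointed Phi I -> Prop) x y : cls X x <> cls X y -> exists f, sat x f /\ ~ sat y f.
Proof. intros H. apply NNPP; intros Hn. apply H. extensionality z. apply propositional_extensionality.
  assert (E : forall f, sat x f <-> sat y f).
  { intros f. split; intros Hf; apply NNPP; intros Hf'.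
    - apply Hn; exists f; auto.
    - apply Hn; exists (Defs.Neg f). unfold sat in *; simpl; auto. }
  unfold cls, clsD. split; intros [Hz Hf]; split; auto; intros f _; rewrite (Hf f Logic.I); [|symmetry]; apply E. Qed.

Lemma toXL_eq {Phi I} (X : pointed Phi I -> Prop) x y Hx Hy : cls X x = cls X y -> toXL X x Hx = toXL X y Hy.
Proof. intros E. unfold toXL. apply subset_eq_compat. exact E. Qed.

Definition dflt {Phi I} : pointed Phi I :=
  existT _ (@KModel Phi I unit (fun _ _ _ => False) (fun _ _ => False)) tt.

Lemma reps {Phi I} (X : pointed Phi I -> Prop) (l : list (XL X)) :
  exists n (r : nat -> pointed Phi I), (forall i, (i < n)%nat -> X (r i)) /\
    (forall i j, (i < n)%nat -> (j < n)%nat -> cls X (r i) = cls X (r j) -> i = j) /\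
    (forall t, In t l -> exists i, (i < n)%nat /\ proj1_sig t = cls X (r i)).
Proof. induction l as [|t l IH].
  - exists O, (fun _ => dflt). repeat split; intros; try lia. destruct H.
  - destruct IH as [n [r [H1 [H2 H3]]]]. destruct t as [S0 [x [Hx ES]]].
    destruct (classic (exists i, (i < n)%nat /\ cls X x = cls X (r i))) as [[i [Hi Ei]]|Hno].
    + exists n, r. repeat split; auto. intros t [<-|Ht]; auto. exists i; split; auto. simpl; rewrite ES; auto.
    + exists (S n), (fun i => if (i =? n)%nat then x else r i). repeat split.
      * intros i Hi. destruct (Nat.eqb_spec i n); auto. apply H1; lia.
      * intros i j Hi Hj. destruct (Nat.eqb_spec i n), (Nat.eqb_spec j n); try lia; intros E.
        -- exfalso; apply Hno; exists j; split; auto; lia.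
        -- exfalso; apply Hno; exists i; split; auto; lia.
        -- apply H2; auto; lia.
      * intros t [<-|Ht]. exists n; split; [lia|]. rewrite Nat.eqb_refl; simpl; auto.
        destruct (H3 t Ht) as [i [Hi E]]. exists i; split; [lia|]. destruct (Nat.eqb_spec i n); [lia|auto].
Qed.

Lemma dk_bool {Phi I} (f : form Phi I) x y b1 b2 :
  (sat x f <-> b1 = true) -> (sat y f <-> b2 = true) -> dk f x y = if Bool.eqb b1 b2 then 0 else 1.
Proof. intros H1 H2. unfold dk. destruct (excluded_middle_informative _) as [H|H];
  destruct b1, b2; simpl; auto; exfalso; try (apply H; tauto).
  - assert (true = true) by auto. rewrite <- H1, H, H2 in H0. discriminate.
  - assert (true = true) by auto. rewrite <- H2, <- H, H1 in H0. discriminate. Qed.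

Definition enc {Phi I} (n : nat) (chi : nat -> form Phi I) (k : nat) : option (form Phi I) :=
  if (k <? n * n)%nat then
    (if (k / n =? k mod n)%nat then Some (chi (k / n)%nat)
     else if (k / n <? k mod n)%nat then Some (Or (chi (k / n)%nat) (chi (k mod n)%nat)) else None)
  else None.

Definition wgt (n : nat) (W1 : nat -> R) (g : nat -> nat -> R) (k : nat) : R :=
  if (k / n =? k mod n)%nat then W1 (k / n)%nat else g (k / n)%nat (k mod n)%nat.

Lemma decode n i j : (j < n)%nat -> ((i * n + j) / n = i /\ (i * n + j) mod n = j)%nat.
Proof. intros Hj. assert (n <> 0)%nat by lia. split.
  rewrite Nat.div_add_l by auto. rewrite Nat.div_small by auto. lia.
  rewrite Nat.add_comm, Nat.Div0.mod_add. apply Nat.mod_small; auto. Qed.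

Lemma enc_none {Phi I} n (chi : nat -> form Phi I) k : (n * n <= k)%nat -> enc n chi k = None.
Proof. intros H. unfold enc. destruct (Nat.ltb_spec k (n*n)); [lia|auto]. Qed.

Definition chi_spec {Phi I} (X : pointed Phi I -> Prop) (r : nat -> pointed Phi I) n (chi : nat -> form Phi I) :=
  forall i z u, (i < n)%nat -> X z -> (u < n)%nat -> cls X z = cls X (r u) -> (sat z (chi i) <-> (u =? i)%nat = true).

Lemma enc_ext {Phi I} (X : pointed Phi I -> Prop) r n chi k f : chi_spec X r n chi ->
  enc n chi k = Some f ->
  (k < n * n)%nat /\ (k / n < n)%nat /\ (k mod n < n)%nat /\ (k / n <= k mod n)%nat /\
  (forall z u, X z -> (u < n)%nat -> cls X z = cls X (r u) -> (sat z f <-> (u = k / n \/ u = k mod n)%nat)).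
Proof. intros Hchi. unfold enc. destruct (Nat.ltb_spec k (n*n)); [|discriminate].
  assert (n <> 0)%nat by nia.
  assert (k / n < n)%nat by (apply Nat.Div0.div_lt_upper_bound; nia).
  assert (k mod n < n)%nat by (apply Nat.mod_upper_bound; auto).
  destruct (Nat.eqb_spec (k/n) (k mod n)) as [E|E].
  - intros [= <-]. split; [lia|]. split; [lia|]. split; [lia|]. split; [lia|].
    intros z u Hz Hu Ez. rewrite (Hchi _ z u) by auto. rewrite Nat.eqb_eq. split; intros; lia.
  - destruct (Nat.ltb_spec (k/n) (k mod n)); [|discriminate]. intros [= <-].
    split; [lia|]. split; [lia|]. split; [lia|]. split; [lia|].
    intros z u Hz Hu Ez. rewrite sat_or, (Hchi _ z u), (Hchi _ z u) by auto. rewrite !Nat.eqb_eq. tauto.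
Qed.

Lemma enc_inj {Phi I} (X : pointed Phi I -> Prop) r n chi k l f f' : chi_spec X r n chi ->
  (forall m, X (r m)) ->
  enc n chi k = Some f -> enc n chi l = Some f' -> (forall z, X z -> (sat z f <-> sat z f')) -> k = l.
Proof. intros Hchi HX Hk Hl Hff.
  destruct (enc_ext X r n chi k f Hchi Hk) as [K1 [K2 [K3 [K4 K5]]]].
  destruct (enc_ext X r n chi l f' Hchi Hl) as [L1 [L2 [L3 [L4 L5]]]].
  assert (Hm : forall m, (m < n)%nat -> ((m = k/n \/ m = k mod n) <-> (m = l/n \/ m = l mod n))%nat).
  { intros m Hm. rewrite <- (K5 (r m) m), <- (L5 (r m) m) by auto. apply Hff; auto. }
  destruct (Hm (k/n)%nat K2) as [A1 _]. specialize (A1 (or_introl eq_refl)).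
  destruct (Hm (k mod n)%nat K3) as [A2 _]. specialize (A2 (or_intror eq_refl)).
  destruct (Hm (l/n)%nat L2) as [_ A3]. specialize (A3 (or_introl eq_refl)).
  destruct (Hm (l mod n)%nat L3) as [_ A4]. specialize (A4 (or_intror eq_refl)).
  rewrite (Nat.div_mod_eq k n), (Nat.div_mod_eq l n).
  assert (k / n = l / n /\ k mod n = l mod n)%nat as [-> ->] by lia. reflexivity. Qed.

Lemma term_eval {Phi I} (X : pointed Phi I -> Prop) r n chi W1 g x y u v i j :
  chi_spec X r n chi ->
  X x -> X y -> (u < n)%nat -> (v < n)%nat -> u <> v -> cls X x = cls X (r u) -> cls X y = cls X (r v) ->
  (i < n)%nat -> (j < n)%nat ->
  dw_term (enc n chi) (wgt n W1 g) x y (i * n + j) = Eterm W1 g u v i j.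
Proof.
  intros Hchi Hx Hy Hu Hv Huv Ex Ey Hi Hj.
  destruct (decode n i j Hj) as [D1 D2].
  assert (Hlt : (i * n + j <? n * n)%nat = true) by (apply Nat.ltb_lt; nia).
  unfold dw_term, enc, wgt. rewrite Hlt, D1, D2.
  destruct (Nat.eqb_spec i j) as [<-|Hij].
  - rewrite (dk_bool _ x y (u =? i)%nat (v =? i)%nat) by (apply Hchi; auto).
    unfold Eterm. rewrite Nat.eqb_refl, Nat.ltb_irrefl. unfold indb.
    rewrite (Nat.eqb_sym i u), (Nat.eqb_sym i v).
    destruct (Nat.eqb_spec u i), (Nat.eqb_spec v i); simpl; try lia; lra.
  - destruct (Nat.ltb_spec i j).
    + rewrite (dk_bool _ x y (orb (u =? i)%nat (u =? j)%nat) (orb (v =? i)%nat (v =? j)%nat)).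
      2: rewrite sat_or, Bool.orb_true_iff, (Hchi i x u), (Hchi j x u) by auto; tauto.
      2: rewrite sat_or, Bool.orb_true_iff, (Hchi i y v), (Hchi j y v) by auto; tauto.
      unfold Eterm. destruct (Nat.eqb_spec i j); [lia|]. destruct (Nat.ltb_spec i j); [|lia].
      rewrite (Nat.eqb_sym i u), (Nat.eqb_sym j u), (Nat.eqb_sym i v), (Nat.eqb_sym j v).
      unfold indb.
      destruct (Nat.eqb_spec u i), (Nat.eqb_spec u j), (Nat.eqb_spec v i), (Nat.eqb_spec v j); simpl; try lia; lra.
    + unfold Eterm. destruct (Nat.eqb_spec i j), (Nat.ltb_spec i j); try lia. unfold indb; lra.
Qed.

Theorem proposition18
  (Phi I : Type)
  (HPhi_count : exists f : Phi -> nat, forall a b, f a = f b -> a = b)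
  (HPhi_ne : inhabited Phi)
  (HI_count : exists f : I -> nat, forall a b, f a = f b -> a = b)
  (HI_ne : inhabited I)
  (X : pointed Phi I -> Prop)
  (L : form Phi I -> Prop)
  (HL : normal_logic L)
  (Hsound : sound L X)
  (Hfin : finite_type (XL X))
  (d : XL X -> XL X -> R)
  (Hd : is_metric d) :
  exists (D : form Phi I -> Prop) (dw : pointed Phi I -> pointed Phi I -> R) (c : R),
    descriptor L D /\ in_DXD L D dw /\ 0 <= c /\
    forall (x y : pointed Phi I) (Hx : X x) (Hy : X y),
      clsD X (fun _ => True) x <> clsD X (fun _ => True) y ->
      dw x y = d (@toXL Phi I X x Hx) (@toXL Phi I X y Hy) + c.
Proof.
  destruct Hfin as [l Hl].
  destruct (reps X l) as [n [r0 [HX0 [Hdist0 Hcov0]]]].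
  assert (Hcov0' : forall x, X x -> exists u, (u < n)%nat /\ cls X x = cls X (r0 u)).
  { intros x Hx. destruct (Hcov0 _ (Hl (toXL X x Hx))) as [u [Hu E]]. exists u; split; auto. }
  destruct (Compare_dec.le_lt_dec 2 n) as [Hn2 | Hn2].
  2: {
    exists (fun _ => False), (fun x y => 0), 0. split; [intros ? ? ? []|]. split.
    - exists (fun _ => None), (fun _ => 1). split; [|split; [|split]].
      + split; [intros; discriminate|]. split; [intros f []|]. intros; discriminate.
      + intros; discriminate.
      + exists (fsum (wseq (fun _ : nat => (None : option (form Phi I))) (fun _ => 1)) 0).
        apply is_series_fin; intros; reflexivity.
      + intros x y. symmetry. apply is_series_unique.
        apply (is_series_fin (dw_term (fun _ : nat => (None : option (form Phi I))) (fun _ => 1) x y) 0).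
        intros; reflexivity.
    - split; [lra|]. intros x y Hx Hy Hne. exfalso.
      destruct (Hcov0' x Hx) as [u [Hu Eu]], (Hcov0' y Hy) as [v [Hv Ev]].
      apply Hne. change (cls X x = cls X y). assert (u = v) by lia. subst; congruence. }
  set (r := fun i => if (i <? n)%nat then r0 i else r0 O).
  assert (Hr : forall i, (i < n)%nat -> r i = r0 i).
  { intros i Hi. unfold r. destruct (Nat.ltb_spec i n); [auto|lia]. }
  assert (HX : forall i, X (r i)).
  { intros i. unfold r. destruct (Nat.ltb_spec i n); apply HX0; lia. }
  assert (Hdist : forall i j, (i < n)%nat -> (j < n)%nat -> cls X (r i) = cls X (r j) -> i = j).
  { intros i j Hi Hj. rewrite !Hr by auto. apply Hdist0; auto. }
  assert (Hcov : forall x, X x -> exists u, (u < n)%nat /\ cls X x = cls X (r u)).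
  { intros x Hx. destruct (Hcov0' x Hx) as [u [Hu E]]. exists u; split; auto. rewrite Hr; auto. }
  clear Hdist0 Hcov0 Hcov0' Hr.
  assert (Hchi0 : forall i, exists f, forall z u, (i < n)%nat -> X z -> (u < n)%nat ->
            cls X z = cls X (r u) -> (sat z f <-> (u =? i)%nat = true)).
  { intros i.
    assert (Hsp : forall j, exists f, sat (r i) f /\ (cls X (r i) <> cls X (r j) -> ~ sat (r j) f)).
    { intros j. destruct (classic (cls X (r i) = cls X (r j))) as [E|E].
      - exists (Defs.Top Phi I). split; [unfold sat; simpl; exact Logic.I | tauto].
      - destruct (sep X _ _ E) as [f [H1 H2]]. exists f; auto. }
    set (sp := fun j => proj1_sig (constructive_indefinite_description _ (Hsp j))).
    assert (Hsp' : forall j, sat (r i) (sp j) /\ (cls X (r i) <> cls X (r j) -> ~ sat (r j) (sp j)))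
      by (intros j; exact (proj2_sig (constructive_indefinite_description _ (Hsp j)))).
    exists (bigAnd sp n). intros z u Hi Hz Hu E. rewrite sat_bigAnd, Nat.eqb_eq. split.
    - intros H. destruct (Nat.eq_dec u i) as [|Hne]; [auto|]. exfalso.
      specialize (H u Hu). rewrite (agree X z (r u) Hz E) in H.
      refine (proj2 (Hsp' u) _ H). intros E'. apply Hne. symmetry. apply Hdist; auto.
    - intros ->. intros j Hj. rewrite (agree X z (r i) Hz E). apply Hsp'. }
  set (chi := fun i => proj1_sig (constructive_indefinite_description _ (Hchi0 i))).
  assert (Hchi : chi_spec X r n chi).
  { intros i z u. exact (proj2_sig (constructive_indefinite_description _ (Hchi0 i)) z u). }
  destruct Hd as [Hd0 [Hdsym Hdtri]].
  set (Dm := fun i j => d (toXL X (r i) (HX i)) (toXL X (r j) (HX j))).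
  assert (Dm_nn : forall i j, 0 <= Dm i j).
  { intros i j. unfold Dm. set (a := toXL X (r i) (HX i)). set (b := toXL X (r j) (HX j)).
    pose proof (Hdtri a b a). rewrite (proj2 (Hd0 a a) eq_refl), (Hdsym b a) in H. lra. }
  assert (Dm_sym : forall i j, Dm i j = Dm j i) by (intros; unfold Dm; apply Hdsym).
  assert (Dm_0 : forall i, Dm i i = 0) by (intros; unfold Dm; apply Hd0; reflexivity).
  set (M := 1 + fsum2 n Dm).
  assert (HM : forall i j, (i < n)%nat -> (j < n)%nat -> Dm i j <= fsum2 n Dm).
  { intros i j Hi Hj. unfold fsum2.
    apply Rle_trans with (fsum (fun j => Dm i j) n).
    apply (fsum_ge_term (fun j => Dm i j)); auto.
    apply (fsum_ge_term (fun i => fsum (fun j => Dm i j) n)); auto.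
    intros; apply fsum_nonneg; auto. }
  assert (HM0 : 0 <= fsum2 n Dm) by (unfold fsum2; apply fsum_nonneg; intros; apply fsum_nonneg; auto).
  set (g := fun i j => M - Dm i j / 2).
  set (W1 := fun i => 1 + fsum (Dm i) n / 2).
  set (e := enc n chi). set (w := wgt n W1 g).
  assert (He0 : forall k, (n * n <= k)%nat -> e k = None) by (intros; apply enc_none; auto).
  exists (fun f => exists k f', e k = Some f' /\ equivL L f' f).
  exists (fun x y => Series (dw_term e w x y)).
  exists (2 + 2 * M * (INR n - 2)).
  split.
  { intros a b Hab [k [f' [Hk Hf']]]. exists k, f'; split; auto. eapply equivL_trans; eauto. }
  split.
  { exists e, w. split; [|split; [|split]].
    - split; [|split].
      + intros k f Hk. exists k, f; split; auto. apply equivL_refl; auto.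
      + intros f [k [f' [Hk Hf']]]. exists k, f'; split; auto. apply equivL_sym; auto.
      + intros k l0 f f' Hk Hl0 Heq. apply (enc_inj X r n chi k l0 f f' Hchi HX Hk Hl0).
        intros z Hz. apply sat_iff. exact (Hsound _ Heq z Hz).
    - intros k f Hk. destruct (enc_ext X r n chi k f Hchi Hk) as [K1 [K2 [K3 [K4 K5]]]].
      unfold w, wgt. destruct (Nat.eqb_spec (k / n) (k mod n)).
      + unfold W1. assert (0 <= fsum (Dm (k / n)%nat) n) by (apply fsum_nonneg; auto). lra.
      + unfold g, M. pose proof (HM (k / n)%nat (k mod n)%nat K2 K3).
        pose proof (Dm_nn (k / n)%nat (k mod n)%nat). lra.
    - exists (fsum (wseq e w) (n * n)). apply is_series_fin. intros k Hk. unfold wseq. rewrite He0; auto.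
    - intros; reflexivity. }
  split.
  { assert (1 <= INR 2) by (simpl; lra). assert (INR 2 <= INR n) by (apply le_INR; auto).
    simpl in *. assert (0 <= 2 * M * (INR n - 2)) by (apply Rmult_le_pos; unfold M; lra). lra. }
  intros x y Hx Hy Hne. change (cls X x <> cls X y) in Hne.
  destruct (Hcov x Hx) as [u [Hu Eu]], (Hcov y Hy) as [v [Hv Ev]].
  assert (Huv : u <> v) by (intros ->; apply Hne; congruence).
  rewrite (is_series_unique _ _ (is_series_fin (dw_term e w x y) (n * n)
             ltac:(intros k Hk; unfold dw_term; rewrite He0; auto))).
  rewrite fsum_double.
  transitivity (fsum2 n (Eterm W1 g u v)).
  { unfold fsum2. apply fsum_ext; intros i Hi; apply fsum_ext; intros j Hj.
    apply (term_eval X r n chi W1 g x y u v i j Hchi); auto. }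
  rewrite big_eval by (auto; intros; unfold g; rewrite Dm_sym; reflexivity).
  rewrite (toXL_eq X x (r u) Hx (HX u) Eu), (toXL_eq X y (r v) Hy (HX v) Ev).
  change (d (toXL X (r u) (HX u)) (toXL X (r v) (HX v))) with (Dm u v).
  assert (Hg : forall a, fsum (g a) n = INR n * M - fsum (Dm a) n / 2).
  { intros a. unfold g. rewrite fsum_minus, fsum_const.
    rewrite (fsum_ext (fun j => Dm a j / 2) (fun j => / 2 * Dm a j)), fsum_scal; [lra|].
    intros; lra. }
  rewrite !Hg. unfold W1, g. rewrite !Dm_0. lra.
Qed.
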